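(* For any complex numbers $a,b,\alpha,\beta,\xi,\eta$ with $\beta a-\alpha b\neq0$, any natural number $n\ge1$, and any integer $k\ge0$ (with $k\le\lfloor n/2\rfloor$ in the first identity and $k\le\lfloor (n-1)/2\rfloor$ in the second), \[ \sum_{r=k}^{\lfloor n/2\rfloor}\binom{r}{k}\Psi\left(\begin{array}{cc|c} a & b & n \\ \alpha & \beta & r \end{array}\right)\xi^{\lfloor n/2\rfloor-r}\eta^{r-k}=\Psi\left(\begin{array}{cc|c} a\xi-\alpha\eta & b\xi-\beta\eta & n \\ \alpha & \beta & k \end{array}\right), \] \[ \sum_{r=k}^{\lfloor (n-1)/2\rfloor}\binom{r}{k}\Phi\left(\begin{array}{cc|c} a & b & n \\ \alpha & \beta & r \end{array}\right)\xi^{\lfloor (n-1)/2\rfloor-r}\eta^{r-k}=\Phi\left(\begin{array}{cc|c} a\xi-\alpha\eta & b\xi-\beta\eta & n \\ \alpha & \beta & k \end{array}\right). \]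
   Context: $\delta(m)=1$ for $m$ odd, $0$ for $m$ even; $\lfloor\cdot\rfloor$ is the floor. For indeterminates $a,b,\alpha,\beta$ and $n\ge1$, $\Psi\left(\begin{array}{cc|c} a & b & n \\ \alpha & \beta & r \end{array}\right)$ ($0\le r\le\lfloor n/2\rfloor$) and $\Phi\left(\begin{array}{cc|c} a & b & n \\ \alpha & \beta & r \end{array}\right)$ ($0\le r\le\lfloor (n-1)/2\rfloor$) are the unique polynomials in $\mathbb{Z}[a,b,\alpha,\beta]$ such that, identically in $x,y$, $(\beta a-\alpha b)^{\lfloor n/2\rfloor}\frac{x^n+y^n}{(x+y)^{\delta(n)}}=\sum_{r}\Psi\left(\begin{array}{cc|c} a & b & n \\ \alpha & \beta & r \end{array}\right)(\alpha x^2+\beta xy+\alpha y^2)^{\lfloor n/2\rfloor-r}(ax^2+bxy+ay^2)^r$ and $(\beta a-\alpha b)^{\lfloor (n-1)/2\rfloor}\frac{x^n-y^n}{(x-y)(x+y)^{\delta(n-1)}}=\sum_{r}\Phi\left(\begin{array}{cc|c} a & b & n \\ \alpha & \beta & r \end{array}\right)(\alpha x^2+\beta xy+\alpha y^2)^{\lfloor (n-1)/2\rfloor-r}(ax^2+bxy+ay^2)^r$; for numerical arguments these polynomials are evaluated. *)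

(* Defs.v *)
From HB Require Import structures.
From mathcomp Require Import all_boot all_order all_algebra.
From mathcomp Require Import mpoly.
Set Implicit Arguments. Unset Strict Implicit. Unset Printing Implicit Defensive.
Import Order.TTheory GRing.Theory Num.Theory.
Local Open Scope ring_scope.

Definition evalZ4 (C : ringType) (p : {mpoly int[4]}) (a b al be : C) : C :=
  mmap (fun z : int => z%:~R) [fun i : 'I_4 => if val i == 0%N then a
          else if val i == 1%N then b else if val i == 2%N then al else be] p.

Definition delta (m : nat) : nat := odd m.

(* Psi n : nat -> {mpoly int[4]} is the family (r = 0..floor(n/2)) of the
   polynomials Psi(a b n; alpha beta r): the defining identity, identically in
   x, y (stated as an identity of polynomial functions over C, with the
   division by (x+y)^delta(n) cleared). *)
Definition is_Psi_family (C : ringType) (n : nat) (Psi : nat -> {mpoly int[4]}) :=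
  forall a b al be x y : C,
    (be * a - al * b) ^+ (n./2) * (x ^+ n + y ^+ n) =
    (x + y) ^+ delta n *
    \sum_(r < (n./2).+1)
      evalZ4 (Psi r) a b al be
      * (al * x ^+ 2 + be * x * y + al * y ^+ 2) ^+ (n./2 - r)
      * (a * x ^+ 2 + b * x * y + a * y ^+ 2) ^+ r.

Definition is_Phi_family (C : ringType) (n : nat) (Phi : nat -> {mpoly int[4]}) :=
  forall a b al be x y : C,
    (be * a - al * b) ^+ (n.-1./2) * (x ^+ n - y ^+ n) =
    (x - y) * (x + y) ^+ delta n.-1 *
    \sum_(r < (n.-1./2).+1)
      evalZ4 (Phi r) a b al be
      * (al * x ^+ 2 + be * x * y + al * y ^+ 2) ^+ (n.-1./2 - r)
      * (a * x ^+ 2 + b * x * y + a * y ^+ 2) ^+ r.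

(* Main.v *)
Require Import Defs.
From HB Require Import structures.
From mathcomp Require Import all_boot all_order all_algebra.
From mathcomp Require Import mpoly.
From mathcomp Require Import ring.
Import Order.TTheory GRing.Theory Num.Theory.
Local Open Scope ring_scope.

Lemma poly_all0 (C : numClosedFieldType) (p : {poly C}) :
  (forall t, p.[t] = 0) -> p = 0.
Proof.
move=> H; apply: (@roots_geq_poly_eq0 _ p [seq i%:R | i <- iota 0 (size p)]).
- by apply/allP => z /mapP [i _ ->]; apply/rootP.
- rewrite map_inj_uniq ?iota_uniq // => i j /eqP; rewrite eqr_nat => /eqP.
  done.
- by rewrite size_map size_iota.
Qed.

Lemma poly_vanish (C : numClosedFieldType) (p q : {poly C}) :
  q != 0 -> (forall t, q.[t] != 0 -> p.[t] = 0) -> p = 0.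
Proof.
move=> q0 H; have : p * q = 0.
  apply: poly_all0 => t; rewrite hornerM.
  by have [->|/H ->] := eqVneq q.[t] 0; rewrite ?mulr0 ?mul0r.
by move/eqP; rewrite mulf_eq0 (negPf q0) orbF => /eqP.
Qed.

Lemma lin_neq0 (C : numClosedFieldType) (u v : C) :
  (u != 0) || (v != 0) -> v *: 'X + u%:P != 0.
Proof.
case/orP => h; apply/negP => /eqP H.
- by have := congr1 (horner^~ 0) H; rewrite !hornerE; apply/eqP.
- have := congr1 (horner^~ 0) H; rewrite !hornerE => u0.
  have := congr1 (horner^~ 1) H; rewrite !hornerE u0 addr0.
  by apply/eqP.
Qed.

Definition QF {C : nzRingType} (a b x y : C) := a * x ^+ 2 + b * x * y + a * y ^+ 2.

Lemma indep (C : numClosedFieldType) m (e : nat -> C) (a b al be : C) :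
  be * a - al * b != 0 ->
  (forall x y : C, x + y = 1 -> x != y ->
     \sum_(r < m.+1) e r * QF al be x y ^+ (m - r) * QF a b x y ^+ r = 0) ->
  forall r, (r <= m)%N -> e r = 0.
Proof.
move=> hdet H.
set c1 := be - 2 * al; set c2 := b - 2 * a.
have hdet1 : be * a - al * b = a * c1 - al * c2 by rewrite /c1 /c2; ring.
have hdet2 : be * a - al * b = a * (4 * al + c1) + al * (- (4 * a + c2))
  by rewrite /c1 /c2; ring.
pose q1 := (- c1) *: 'X + c2%:P.
pose q2 := (4 * al + c1) *: 'X + (- (4 * a + c2))%:P.
have q1N : q1 != 0.
  apply: lin_neq0; rewrite -negb_and; apply/negP => /andP[/eqP h1 /eqP h2].
  by move: hdet; rewrite hdet1 h1 -(opprK c1) h2 oppr0 !mulr0 subrr eqxx.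
have q2N : q2 != 0.
  apply: lin_neq0; rewrite -negb_and; apply/negP => /andP[/eqP h1 /eqP h2].
  by move: hdet; rewrite hdet2 h1 h2 !mulr0 addr0 eqxx.
pose E := \poly_(i < m.+1) e i.
suff E0 : E = 0.
  by move=> r hr; have := congr1 (fun p : {poly C} => p`_r) E0; rewrite coef_poly ltnS hr coef0.
apply: (@poly_vanish _ _ (q1 * q2) (mulf_neq0 q1N q2N)) => t.
rewrite hornerM mulf_eq0 negb_or => /andP[].
rewrite /q1 /q2 !(hornerD, hornerZ, hornerX, hornerC) => hD hF.
set D := c2 - c1 * t.
have hD' : D != 0.
  by move: hD; apply: contra => /eqP h; apply/eqP; rewrite -[RHS]h /D /c1 /c2; ring.
set F := (4 * al + c1) * t - (4 * a + c2).
have hF' : F != 0.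
  by move: hF; apply: contra => /eqP h; apply/eqP; rewrite -[RHS]h /F /c1 /c2; ring.
set p := (t * al - a) / D.
have h4 : 1 - 4 * p != 0.
  have -> : 1 - 4 * p = - F / D by rewrite /p /F /D /c1 /c2; field; exact: hD'.
  by rewrite mulf_neq0 ?oppr_eq0 ?invr_eq0.
set s := sqrtC (1 - 4 * p).
have hs2 : s ^+ 2 = 1 - 4 * p by rewrite /s sqrtCK.
have hs0 : s != 0 by apply: contra h4 => /eqP h; rewrite -hs2 h expr0n.
have h2 : (2 : C) != 0 by rewrite pnatr_eq0.
pose x := (1 + s) / 2; pose y := (1 - s) / 2.
have hxy : x + y = 1 by rewrite /x /y; field.
have hxy' : x != y.
  apply: contra hs0 => /eqP h; apply/eqP.
  have : x - y = s by rewrite /x /y; field.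
  by rewrite h subrr => <-.
have hp : x * y = p.
  have : x * y = (1 - s ^+ 2) / 4 by rewrite /x /y; field.
  by rewrite hs2 => ->; field.
have hQ1 : forall u v, QF u v x y = u * ((x + y) ^+ 2 - 2 * (x * y)) + v * (x * y).
  by move=> u v; rewrite /QF; ring.
set L := (al * c2 - a * c1) / D.
have hL : L != 0.
  rewrite /L mulf_eq0 invr_eq0 (negPf hD') orbF.
  apply: contra hdet => /eqP h; apply/eqP; rewrite hdet1 -oppr0 -h; ring.
have e1 : QF al be x y = L.
  rewrite hQ1 hxy hp /L /p /D /c1 /c2; field; exact: hD'.
have e2 : QF a b x y = t * L.
  rewrite hQ1 hxy hp /L /p /D /c1 /c2; field; exact: hD'.
have := H x y hxy hxy'; rewrite e1 e2.
have -> : \sum_(r < m.+1) e r * L ^+ (m - r) * (t * L) ^+ r = L ^+ m * E.[t].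
  rewrite horner_poly mulr_sumr; apply: eq_bigr => i _.
  have -> : L ^+ m = L ^+ (m - i) * L ^+ i by rewrite -exprD subnK // -ltnS.
  rewrite (exprMn _ t L); ring.
by move/eqP; rewrite mulf_eq0 expf_eq0 (negPf hL) andbF /= => /eqP.
Qed.

Lemma expand (C : numClosedFieldType) (c : nat -> C) m (xi eta u v w : C) :
  v * xi = w + eta * u ->
  xi ^+ m * \sum_(r < m.+1) c r * u ^+ (m - r) * v ^+ r =
  \sum_(k < m.+1) (\sum_(k <= r < m.+1) 'C(r, k)%:R * c r * xi ^+ (m - r) * eta ^+ (r - k))
     * u ^+ (m - k) * w ^+ k.
Proof.
move=> hv.
have step : forall k : 'I_m.+1,
  (\sum_(k <= r < m.+1) 'C(r, k)%:R * c r * xi ^+ (m - r) * eta ^+ (r - k))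
     * u ^+ (m - k) * w ^+ k =
  \sum_(r < m.+1) 'C(r, k)%:R * c r * xi ^+ (m - r) * eta ^+ (r - k) * u ^+ (m - k) * w ^+ k.
  move=> k; rewrite big_distrl big_distrl /=.
  rewrite -(big_mkord xpredT (fun r => 'C(r, k)%:R * c r * xi ^+ (m - r) * eta ^+ (r - k) * u ^+ (m - k) * w ^+ k)).
  rewrite (big_cat_nat (leq0n k)) /=; last by rewrite ltnW ?ltn_ord.
  rewrite [X in _ = X + _]big1_seq ?add0r //.
  move=> i /andP[_]; rewrite mem_iota add0n subn0 => /andP[_ hi]; by rewrite bin_small // !mul0r.
rewrite (eq_bigr _ (fun k _ => step k)) exchange_big mulr_sumr /=.
apply: eq_bigr => r _.
have hr : (r <= m)%N by rewrite -ltnS.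
have -> : xi ^+ m * (c r * u ^+ (m - r) * v ^+ r) =
          c r * xi ^+ (m - r) * u ^+ (m - r) * (v * xi) ^+ r.
  rewrite exprMn -{1}(subnK hr) exprD; ring.
rewrite hv addrC exprDn mulr_sumr.
pose G := fun k : nat => 'C(r, k)%:R * c r * xi ^+ (m - r) * eta ^+ (r - k) * u ^+ (m - k) * w ^+ k.
have EG : \sum_(k < r.+1) G k = \sum_(k < m.+1) G k.
  rewrite (big_ord_widen (m.+1) G (_ : r.+1 <= m.+1)%N) //.
  rewrite big_mkcond /=; apply: eq_bigr => k _.
  by case: ifP => hk //; rewrite /G bin_small ?ltnNge ?negbT // !mul0r.
rewrite -EG; apply: eq_bigr => k _; rewrite /G.
have hk : (k < r.+1)%N by [].
have hk' : (k <= r)%N by rewrite -ltnS.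
rewrite -mulr_natl.
have -> : u ^+ (m - k) = u ^+ (m - r) * u ^+ (r - k).
  by rewrite -exprD addnBA // subnK.
rewrite exprMn; ring.
Qed.

Lemma main_nz (C : numClosedFieldType) m (c : C -> C -> nat -> C) (W : C -> C -> C) (al be : C) :
  (forall a b x y, x + y = 1 -> x != y ->
     (be * a - al * b) ^+ m * W x y =
     \sum_(r < m.+1) c a b r * QF al be x y ^+ (m - r) * QF a b x y ^+ r) ->
  forall a b xi eta, be * a - al * b != 0 -> xi != 0 -> forall k, (k <= m)%N ->
  \sum_(k <= r < m.+1) 'C(r, k)%:R * c a b r * xi ^+ (m - r) * eta ^+ (r - k)
   = c (a * xi - al * eta) (b * xi - be * eta) k.
Proof.
move=> H a b xi eta hdet hxi k hk.
set a' := a * xi - al * eta; set b' := b * xi - be * eta.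
have hdet' : be * a' - al * b' = xi * (be * a - al * b) by rewrite /a' /b'; ring.
apply/eqP; rewrite -subr_eq0; apply/eqP.
pose d := fun k => \sum_(k <= r < m.+1) 'C(r, k)%:R * c a b r * xi ^+ (m - r) * eta ^+ (r - k).
apply: (@indep C m (fun k => d k - c a' b' k) a' b' al be) => //.
  by rewrite hdet' mulf_neq0.
move=> x y hxy hne.
under eq_bigr do rewrite mulrBl mulrBl.
rewrite sumrB -H // /d.
rewrite -(@expand C (c a b) m xi eta (QF al be x y) (QF a b x y)); last first.
  by rewrite /QF /a' /b'; ring.
rewrite -H // hdet' exprMn; ring.
Qed.

Lemma evalZ4_poly (C : numClosedFieldType) (p : {mpoly int[4]}) (a b al be eta : C) :
  exists P : {poly C}, forall xi,
    evalZ4 p (a * xi - al * eta) (b * xi - be * eta) al be = P.[xi].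
Proof.
exists (evalZ4 p (a *: 'X - (al * eta)%:P) (b *: 'X - (be * eta)%:P) al%:P be%:P).
move=> xi; rewrite /evalZ4 /mmap -horner_evalE rmorph_sum /=.
apply: eq_bigr => mm _; rewrite rmorphM rmorph_int /mmap1 rmorph_prod /=.
congr (_ * _); apply: eq_bigr => i _; rewrite rmorphXn; congr (_ ^+ _).
rewrite /= horner_evalE.
case: ifP => _; first by rewrite !hornerE.
case: ifP => _; first by rewrite !hornerE.
by case: ifP => _; rewrite !hornerE.
Qed.

Lemma main_all (C : numClosedFieldType) m (F : nat -> {mpoly int[4]}) (W : C -> C -> C) (al be : C) :
  (forall a b x y, x + y = 1 -> x != y ->
     (be * a - al * b) ^+ m * W x y =
     \sum_(r < m.+1) evalZ4 (F r) a b al be * QF al be x y ^+ (m - r) * QF a b x y ^+ r) ->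
  forall a b xi eta, be * a - al * b != 0 -> forall k, (k <= m)%N ->
  \sum_(k <= r < m.+1) 'C(r, k)%:R * evalZ4 (F r) a b al be * xi ^+ (m - r) * eta ^+ (r - k)
   = evalZ4 (F k) (a * xi - al * eta) (b * xi - be * eta) al be.
Proof.
move=> H a b xi eta hdet k hk.
have [P hP] := @evalZ4_poly C (F k) a b al be eta.
pose Lp := \sum_(k <= r < m.+1)
   ('C(r, k)%:R * evalZ4 (F r) a b al be * eta ^+ (r - k)) *: ('X : {poly C}) ^+ (m - r).
have hL : forall t, Lp.[t] = \sum_(k <= r < m.+1)
   'C(r, k)%:R * evalZ4 (F r) a b al be * t ^+ (m - r) * eta ^+ (r - k).
  move=> t; rewrite /Lp horner_sum; apply: eq_bigr => r _.
  rewrite hornerZ hornerXn; ring.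
have E : Lp - P = 0.
  apply: (@poly_vanish C (Lp - P) 'X); first by rewrite polyX_eq0.
  move=> t; rewrite hornerX => ht.
  rewrite hornerD hornerN hL -hP.
  rewrite (@main_nz C m (fun a b r => evalZ4 (F r) a b al be) W al be H) //.
  by rewrite subrr.
by rewrite -hL hP; apply/eqP; rewrite -subr_eq0 -hornerN -hornerD E horner0.
Qed.

Theorem theorem10p6 (C : numClosedFieldType) (n : nat) (hn : (1 <= n)%N)
  (Psi Phi : nat -> {mpoly int[4]})
  (hPsi : is_Psi_family C n Psi) (hPhi : is_Phi_family C n Phi)
  (a b al be xi eta : C) (hdet : be * a - al * b != 0) :
  (forall k : nat, (k <= n./2)%N ->
     \sum_(k <= r < (n./2).+1)
        'C(r, k)%:R * evalZ4 (Psi r) a b al be * xi ^+ (n./2 - r) * eta ^+ (r - k)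
     = evalZ4 (Psi k) (a * xi - al * eta) (b * xi - be * eta) al be)
  /\
  (forall k : nat, (k <= n.-1./2)%N ->
     \sum_(k <= r < (n.-1./2).+1)
        'C(r, k)%:R * evalZ4 (Phi r) a b al be * xi ^+ (n.-1./2 - r) * eta ^+ (r - k)
     = evalZ4 (Phi k) (a * xi - al * eta) (b * xi - be * eta) al be).
Proof.
split.
  apply: (@main_all C (n./2) Psi (fun x y => x ^+ n + y ^+ n) al be) => //.
  by move=> a' b' x y hxy _; rewrite hPsi hxy expr1n mul1r.
apply: (@main_all C (n.-1./2) Phi (fun x y => (x ^+ n - y ^+ n) / (x - y)) al be) => //.
move=> a' b' x y hxy hne; rewrite mulrA hPhi hxy expr1n mulr1.
have hne' : x - y != 0 by rewrite subr_eq0.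
rewrite /QF; field; exact: hne'.
Qed.
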